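(* Let $n\ge 2$, $m_1,\dots,m_n>0$, $f:\mathbb{R}_{>0}\to\mathbb{R}_{>0}$ positive with $\sqrt{x}f(x)$ decreasing, and let $q_k(t)=p(t+h_k)$, $k=1,\dots,n$, be a choreographic solution of $$\ddot q_k=\sum_{j=1,\,j\neq k}^{n} m_j (q_j-q_k)\, f\!\left(\|q_j-q_k\|^2\right),\qquad k\in\{1,\dots,n\},$$ with $\sum_{k=1}^n m_kq_k=0$, for which the curve $p$ has an axis of symmetry. Then for all $l,k\in\{1,\dots,n\}$, $l\neq k$, and all $t$, writing $F(v)=v\,f(\|v\|^2)$: (i) $(m_k-m_l)F\big(p(t+h_l-h_k)-p(t)\big)=\sum_{j\neq k,l} m_j\Big(F\big(p(t+h_j-h_k)-p(t)\big)-F\big(p(t-(h_j-h_l))-p(t)\big)\Big)$; (ii) $(m_k-m_l)F\big(p(t+(h_l-h_k))-p(t)\big)=\sum_{j\neq k,l} m_j\Big(F\big(p(t+(h_j-h_k))-p(t+(h_l-h_k))\big)-F\big(p(t+(h_l-h_j))-p(t+(h_l-h_k))\big)\Big)$; (iii) $(m_k-m_l)\big(p(t+h_l-h_k)-p(t)\big)=\sum_{j\neq k,l} m_j\Big(\big(p(t+h_j-h_k)-p(t)\big)-\big(p(t-(h_j-h_l))-p(t)\big)\Big)$; (iv) $(m_k-m_l)\big(p(t+(h_l-h_k))-p(t)\big)=\sum_{j\neq k,l} m_j\Big(\big(p(t+(h_j-h_k))-p(t+(h_l-h_k))\big)-\big(p(t+(h_l-h_j))-p(t+(h_l-h_k))\big)\Big)$,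 where all sums run over $j\in\{1,\dots,n\}\setminus\{k,l\}$.
   Context: A choreographic solution is one for which there exist a twice continuously differentiable periodic function $p$ and constants $h_1,\dots,h_n$ with $q_k(t)=p(t+h_k)$. The axis of symmetry hypothesis is understood, as in the paper, as: $p$ takes values in $\mathbb{R}^2$ and $p(-t)=\begin{pmatrix}1&0\\0&-1\end{pmatrix}p(t)$ for all $t\in\mathbb{R}$. *)

(* Defs.v *)
From Stdlib Require Import Reals List.
From Coquelicot Require Import Coquelicot.
Open Scope R_scope.

Definition V2 := (R * R)%type.
Definition vadd (u v : V2) : V2 := (fst u + fst v, snd u + snd v).
Definition vsub (u v : V2) : V2 := (fst u - fst v, snd u - snd v).
Definition vscale (a : R) (v : V2) : V2 := (a * fst v, a * snd v).
Definition vzero : V2 := (0, 0).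
Definition nsq (v : V2) : R := fst v ^ 2 + snd v ^ 2.

(* sum over indices j = 0, ..., n-1  (bodies are indexed 0..n-1) *)
Definition vsum (n : nat) (g : nat -> V2) : V2 :=
  fold_right vadd vzero (map g (List.seq 0 n)).

Definition vsum_excl (n k l : nat) (g : nat -> V2) : V2 :=
  vsum n (fun j => if orb (Nat.eqb j k) (Nat.eqb j l) then vzero else g j).

Definition vsum_excl1 (n k : nat) (g : nat -> V2) : V2 :=
  vsum n (fun j => if Nat.eqb j k then vzero else g j).

Definition C2 (g : R -> R) : Prop :=
  exists g' g'' : R -> R, forall t,
    is_derive g t (g' t) /\ is_derive g' t (g'' t) /\ continuous g'' t.

Definition D2 (c : R -> V2) (t : R) : V2 :=
  (Derive_n (fun s => fst (c s)) 2 t, Derive_n (fun s => snd (c s)) 2 t).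

Definition Ff (f : R -> R) (v : V2) : V2 := vscale (f (nsq v)) v.

Definition qk (p : R -> V2) (h : nat -> R) (k : nat) (t : R) : V2 := p (t + h k).

Definition choreographic_solution (n : nat) (m : nat -> R) (f : R -> R)
    (p : R -> V2) (h : nat -> R) : Prop :=
  C2 (fun s => fst (p s)) /\ C2 (fun s => snd (p s)) /\
  (exists T, 0 < T /\ forall t, p (t + T) = p t) /\
  (* collision-free (f is only defined on (0,oo)) *)
  (forall j k t, (j < n)%nat -> (k < n)%nat -> j <> k ->
     qk p h j t <> qk p h k t) /\
  (forall k t, (k < n)%nat ->
     D2 (qk p h k) t =
     vsum_excl1 n k (fun j =>
       vscale (m j) (Ff f (vsub (qk p h j t) (qk p h k t))))).

Definition axis_symmetric (p : R -> V2) : Prop :=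
  forall t, p (- t) = (fst (p t), - snd (p t)).

(* Main.v *)
Require Import Defs.
From Stdlib Require Import Reals List Lra Lia.
From Coquelicot Require Import Coquelicot.
Open Scope R_scope.

Lemma veq (a b : V2) : fst a = fst b -> snd a = snd b -> a = b.
Proof. destruct a, b; simpl; intros; subst; reflexivity. Qed.

Definition Rf (v : V2) : V2 := (fst v, - snd v).

Lemma fold_z (L : list V2) z : fold_right vadd z L = vadd (fold_right vadd vzero L) z.
Proof.
  induction L as [|a L IH]; simpl.
  - apply veq; unfold vadd, vzero; simpl; ring.
  - rewrite IH. apply veq; unfold vadd; simpl; ring.
Qed.

Lemma vsum_S n g : vsum (S n) g = vadd (vsum n g) (g n).
Proof.
  unfold vsum. rewrite seq_S, map_app, fold_right_app. simpl.
  rewrite fold_z. apply veq; unfold vadd, vzero; simpl; ring.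
Qed.

Lemma vsum_ext n g1 g2 : (forall j, g1 j = g2 j) -> vsum n g1 = vsum n g2.
Proof.
  intros H; induction n as [|n IH]; [reflexivity|].
  rewrite !vsum_S, IH, H; reflexivity.
Qed.

Lemma vsum_sub n a b :
  vsum n (fun j => vsub (a j) (b j)) = vsub (vsum n a) (vsum n b).
Proof.
  induction n as [|n IH].
  - apply veq; unfold vsum, vsub, vzero; simpl; ring.
  - rewrite !vsum_S, IH. apply veq; unfold vadd, vsub; simpl; ring.
Qed.

Lemma vsum_Rf n g : vsum n (fun j => Rf (g j)) = Rf (vsum n g).
Proof.
  induction n as [|n IH].
  - apply veq; unfold vsum, Rf, vzero; simpl; ring.
  - rewrite !vsum_S, IH. apply veq; unfold vadd, Rf; simpl; ring.
Qed.

Lemma Rf_inv v : Rf (Rf v) = v.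
Proof. apply veq; unfold Rf; simpl; ring. Qed.

Lemma split_excl n k l g : k <> l ->
  vsum_excl1 n k g = vadd (if Nat.ltb l n then g l else vzero) (vsum_excl n k l g).
Proof.
  intros Hkl. induction n as [|n IH].
  - apply veq; unfold vsum_excl1, vsum_excl, vsum, vadd, vzero; simpl; ring.
  - unfold vsum_excl1, vsum_excl in *. rewrite !vsum_S, IH.
    destruct (Nat.eqb_spec n k), (Nat.eqb_spec n l), (Nat.ltb_spec l n),
      (Nat.ltb_spec l (S n)); try lia; subst; simpl;
      apply veq; unfold vadd, vzero; simpl; ring.
Qed.

Lemma excl_comm n k l g : vsum_excl n k l g = vsum_excl n l k g.
Proof. unfold vsum_excl; apply vsum_ext; intros j; rewrite Bool.orb_comm; auto. Qed.

Lemma excl_sub n k l a b : vsum_excl n k l (fun j => vsub (a j) (b j)) =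
  vsub (vsum_excl n k l a) (vsum_excl n k l b).
Proof.
  unfold vsum_excl; rewrite <- vsum_sub; apply vsum_ext; intros j.
  destruct (_ || _)%bool; auto. apply veq; unfold vsub, vzero; simpl; ring.
Qed.

Lemma fin c1 c2 X Y SA SB : vadd (vscale c1 X) SA = vadd (vscale c2 Y) SB -> Y = X ->
  vscale (c2 - c1) X = vsub SA SB.
Proof.
  intros H HY; subst Y.
  pose proof (f_equal fst H) as H1. pose proof (f_equal snd H) as H2.
  unfold vadd, vscale in *; simpl in *.
  apply veq; unfold vsub; simpl; lra.
Qed.

Lemma fin2 c1 c2 X Z SA SB : vadd (vscale c1 X) SA = vadd (vscale c2 X) SB ->
  Z = vscale (-1) X ->
  vscale (c1 - c2) Z = vsub SA SB.
Proof.
  intros H HY; subst Z.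
  pose proof (f_equal fst H) as H1. pose proof (f_equal snd H) as H2.
  unfold vadd, vscale in *; simpl in *.
  apply veq; unfold vsub; simpl; lra.
Qed.

Section Gen.
Variables (n : nat) (m : nat -> R) (p : R -> V2) (h : nat -> R) (Phi : V2 -> V2).
Hypothesis Hodd : forall a b, Phi (vsub a b) = vscale (-1) (Phi (vsub b a)).
Hypothesis HE : forall k l s, (k < n)%nat -> (l < n)%nat ->
  vsum_excl1 n k (fun j => vscale (m j) (Phi (vsub (p (s + h j - h k)) (p s)))) =
  vsum_excl1 n l (fun j => vscale (m j) (Phi (vsub (p (s - (h j - h l))) (p s)))).

Lemma gen l k t : (l < n)%nat -> (k < n)%nat -> l <> k ->
  vscale (m k - m l) (Phi (vsub (p (t + h l - h k)) (p t))) =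
    vsum_excl n k l (fun j => vscale (m j)
      (vsub (Phi (vsub (p (t + h j - h k)) (p t)))
            (Phi (vsub (p (t - (h j - h l))) (p t))))) /\
  vscale (m k - m l) (Phi (vsub (p (t + (h l - h k))) (p t))) =
    vsum_excl n k l (fun j => vscale (m j)
      (vsub (Phi (vsub (p (t + (h j - h k))) (p (t + (h l - h k)))))
            (Phi (vsub (p (t + (h l - h j))) (p (t + (h l - h k))))))).
Proof.
  intros Hl Hk Hlk.
  assert (Hsc : forall c a b, vscale c (vsub a b) = vsub (vscale c a) (vscale c b)).
  { intros; apply veq; unfold vscale, vsub; simpl; ring. }
  assert (Hx : forall A B : nat -> V2,
    vsub (vsum_excl n k l (fun j => vscale (m j) (A j)))
         (vsum_excl n k l (fun j => vscale (m j) (B j))) =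
    vsum_excl n k l (fun j => vscale (m j) (vsub (A j) (B j)))).
  { intros A B. rewrite <- excl_sub. unfold vsum_excl; apply vsum_ext; intros j.
    destruct (_ || _)%bool; auto. }
  split.
  - pose proof (HE k l t Hk Hl) as H.
    rewrite (split_excl n k l) in H by auto.
    rewrite (split_excl n l k) in H by auto.
    rewrite (proj2 (Nat.ltb_lt _ _) Hl), (proj2 (Nat.ltb_lt _ _) Hk) in H.
    rewrite (excl_comm n l k) in H.
    rewrite <- Hx.
    eapply fin; [exact H|].
    replace (t - (h k - h l)) with (t + h l - h k) by ring. reflexivity.
  - set (u := t + (h l - h k)).
    pose proof (HE l k u Hl Hk) as H.
    rewrite (split_excl n l k) in H by auto.
    rewrite (split_excl n k l) in H by auto.
    rewrite (proj2 (Nat.ltb_lt _ _) Hl), (proj2 (Nat.ltb_lt _ _) Hk) in H.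
    rewrite (excl_comm n l k) in H.
    rewrite <- Hx.
    assert (E1 : u + h k - h l = t) by (unfold u; ring).
    assert (E2 : u - (h l - h k) = t) by (unfold u; ring).
    rewrite E1, E2 in H.
    assert (E3 : forall j, u + h j - h l = t + (h j - h k)) by (intros; unfold u; ring).
    assert (E4 : forall j, u - (h j - h k) = t + (h l - h j)) by (intros; unfold u; ring).
    assert (F3 : vsum_excl n k l (fun j => vscale (m j) (Phi (vsub (p (u + h j - h l)) (p u))))
      = vsum_excl n k l (fun j => vscale (m j) (Phi (vsub (p (t + (h j - h k))) (p u))))).
    { unfold vsum_excl; apply vsum_ext; intros j; rewrite E3; reflexivity. }
    assert (F4 : vsum_excl n k l (fun j => vscale (m j) (Phi (vsub (p (u - (h j - h k))) (p u))))
      = vsum_excl n k l (fun j => vscale (m j) (Phi (vsub (p (t + (h l - h j))) (p u))))).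
    { unfold vsum_excl; apply vsum_ext; intros j; rewrite E4; reflexivity. }
    rewrite F3, F4 in H.
    eapply fin2; [exact H|]. apply Hodd.
Qed.
End Gen.


Lemma Ff_odd f a b : Ff f (vsub a b) = vscale (-1) (Ff f (vsub b a)).
Proof.
  unfold Ff. replace (nsq (vsub a b)) with (nsq (vsub b a)) by (unfold nsq, vsub; simpl; ring).
  apply veq; unfold vscale, vsub; simpl; ring.
Qed.

Lemma Ff_Rf f a b : Ff f (vsub (Rf a) (Rf b)) = Rf (Ff f (vsub a b)).
Proof.
  unfold Ff. replace (nsq (vsub (Rf a) (Rf b))) with (nsq (vsub a b)) by (unfold nsq, vsub, Rf; simpl; ring).
  apply veq; unfold vscale, vsub, Rf; simpl; ring.
Qed.

Lemma vscale_Rf c v : vscale c (Rf v) = Rf (vscale c v).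
Proof. apply veq; unfold vscale, Rf; simpl; ring. Qed.

Lemma C2_exn g : C2 g -> forall y k, (k <= 2)%nat -> ex_derive_n g k y.
Proof.
  intros [g' [g'' Hg]] y k Hk.
  destruct k as [|[|[|k]]]; try lia; simpl.
  - exact I.
  - exists (g' y). apply Hg.
  - apply ex_derive_ext with g'.
    + intros z. symmetry. apply is_derive_unique. apply Hg.
    + exists (g'' y). apply Hg.
Qed.

Lemma D2_refl p : C2 (fun s => fst (p s)) -> C2 (fun s => snd (p s)) ->
  axis_symmetric p -> forall s, D2 p (- s) = Rf (D2 p s).
Proof.
  intros H1 H2 Hs s. unfold D2, Rf; cbn [fst snd]. f_equal.
  - rewrite <- (Derive_n_ext (fun y => fst (p (- y)))).
    2:{ intros y. rewrite Hs. reflexivity. }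
    rewrite (Derive_n_comp_opp (fun z => fst (p z))).
    + rewrite Ropp_involutive. simpl. ring.
    + apply filter_forall. intros y k Hk. apply C2_exn; auto.
  - rewrite <- (Derive_n_opp (fun y => snd (p y))).
    rewrite (Derive_n_ext (fun y => - snd (p y)) (fun y => snd (p (- y)))).
    2:{ intros y. rewrite Hs. reflexivity. }
    rewrite (Derive_n_comp_opp (fun z => snd (p z))).
    + simpl. ring.
    + apply filter_forall. intros y k Hk. apply C2_exn; auto.
Qed.
Theorem lemma2 (n : nat) (m : nat -> R) (f : R -> R) (p : R -> V2) (h : nat -> R) :
  (2 <= n)%nat ->
  (forall k, (k < n)%nat -> 0 < m k) ->
  (forall x, 0 < x -> 0 < f x) ->
  (forall x y, 0 < x -> x < y -> sqrt y * f y < sqrt x * f x) ->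
  choreographic_solution n m f p h ->
  (forall t, vsum n (fun k => vscale (m k) (qk p h k t)) = vzero) ->
  axis_symmetric p ->
  forall l k t, (l < n)%nat -> (k < n)%nat -> l <> k ->
  (* (i) *)
  vscale (m k - m l) (Ff f (vsub (p (t + h l - h k)) (p t))) =
    vsum_excl n k l (fun j => vscale (m j)
      (vsub (Ff f (vsub (p (t + h j - h k)) (p t)))
            (Ff f (vsub (p (t - (h j - h l))) (p t))))) /\
  (* (ii) *)
  vscale (m k - m l) (Ff f (vsub (p (t + (h l - h k))) (p t))) =
    vsum_excl n k l (fun j => vscale (m j)
      (vsub (Ff f (vsub (p (t + (h j - h k))) (p (t + (h l - h k)))))
            (Ff f (vsub (p (t + (h l - h j))) (p (t + (h l - h k))))))) /\
  (* (iii) *)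
  vscale (m k - m l) (vsub (p (t + h l - h k)) (p t)) =
    vsum_excl n k l (fun j => vscale (m j)
      (vsub (vsub (p (t + h j - h k)) (p t))
            (vsub (p (t - (h j - h l))) (p t)))) /\
  (* (iv) *)
  vscale (m k - m l) (vsub (p (t + (h l - h k))) (p t)) =
    vsum_excl n k l (fun j => vscale (m j)
      (vsub (vsub (p (t + (h j - h k))) (p (t + (h l - h k))))
            (vsub (p (t + (h l - h j))) (p (t + (h l - h k)))))).
Proof.
  intros Hn Hm Hf Hdec [HC1 [HC2 [_ [_ Heq]]]] Hcom Hsym.
  assert (Hs : forall t, p (- t) = Rf (p t)) by (intros; apply Hsym).
  assert (Hr : forall s, D2 p (- s) = Rf (D2 p s)) by (apply D2_refl; auto).
  assert (Ek : forall k s, (k < n)%nat -> D2 p s =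
    vsum_excl1 n k (fun j => vscale (m j) (Ff f (vsub (p (s + h j - h k)) (p s))))).
  { intros k s Hk. pose proof (Heq k (s - h k) Hk) as H.
    unfold D2, qk in H.
    rewrite (Derive_n_comp_trans (fun z => fst (p z))),
      (Derive_n_comp_trans (fun z => snd (p z))) in H.
    replace (s - h k + h k) with s in H by ring.
    unfold D2. rewrite H. unfold vsum_excl1. apply vsum_ext. intros j.
    destruct (j =? k); auto.
    replace (s - h k + h j) with (s + h j - h k) by ring. reflexivity. }
  assert (El : forall l s, (l < n)%nat -> D2 p s =
    vsum_excl1 n l (fun j => vscale (m j) (Ff f (vsub (p (s - (h j - h l))) (p s))))).
  { intros l s Hl. rewrite <- (Rf_inv (D2 p s)), <- Hr, (Ek l (- s) Hl).
    unfold vsum_excl1. rewrite <- vsum_Rf. apply vsum_ext. intros j.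
    destruct (j =? l).
    - apply veq; unfold Rf, vzero; simpl; ring.
    - replace (- s + h j - h l) with (- (s - (h j - h l))) by ring.
      rewrite !Hs, Ff_Rf, vscale_Rf, Rf_inv. reflexivity. }
  assert (C1 : forall k s, vsum n (fun j => vscale (m j) (p (s + h j - h k))) = vzero).
  { intros k s. rewrite <- (Hcom (s - h k)). apply vsum_ext. intros j.
    unfold qk. replace (s - h k + h j) with (s + h j - h k) by ring. reflexivity. }
  assert (C2' : forall l s, vsum n (fun j => vscale (m j) (p (s - (h j - h l)))) = vzero).
  { intros l s. rewrite <- (Rf_inv (vsum n _)), <- vsum_Rf.
    rewrite (vsum_ext _ _ (fun j => vscale (m j) (qk p h j (- s - h l)))).
    - rewrite Hcom. apply veq; unfold Rf, vzero; simpl; ring.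
    - intros j. unfold qk. replace (- s - h l + h j) with (- (s - (h j - h l))) by ring.
      rewrite Hs, vscale_Rf. reflexivity. }
  assert (Lin : forall k l s, (k < n)%nat -> (l < n)%nat ->
    vsum_excl1 n k (fun j => vscale (m j) ((fun v => v) (vsub (p (s + h j - h k)) (p s)))) =
    vsum_excl1 n l (fun j => vscale (m j) ((fun v => v) (vsub (p (s - (h j - h l))) (p s))))).
  { intros k l s Hk Hl.
    assert (Hsc : forall c a b, vscale c (vsub a b) = vsub (vscale c a) (vscale c b)).
    { intros; apply veq; unfold vscale, vsub; simpl; ring. }
    transitivity (vsub vzero (vsum n (fun j => vscale (m j) (p s)))).
    - rewrite <- (C1 k s), <- vsum_sub. unfold vsum_excl1. apply vsum_ext. intros j.
      destruct (Nat.eqb_spec j k).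
      + subst. replace (s + h k - h k) with s by ring.
        apply veq; unfold vsub, vscale, vzero; simpl; ring.
      + apply Hsc.
    - rewrite <- (C2' l s), <- vsum_sub. unfold vsum_excl1. apply vsum_ext. intros j.
      destruct (Nat.eqb_spec j l).
      + subst. replace (s - (h l - h l)) with s by ring.
        apply veq; unfold vsub, vscale, vzero; simpl; ring.
      + symmetry. apply Hsc. }
  intros l k t Hl Hk Hlk.
  destruct (gen n m p h (Ff f) (Ff_odd f)
    (fun k l s Hk Hl => eq_trans (eq_sym (Ek k s Hk)) (El l s Hl)) l k t Hl Hk Hlk) as [A B].
  destruct (gen n m p h (fun v => v)
    (fun a b => ltac:(apply veq; unfold vscale, vsub; simpl; ring))
    Lin l k t Hl Hk Hlk) as [C D].
  auto.
Qed.
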